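(* Let $S$ be a $0$-left cancellative semigroup and let $\sigma$ be a maximal string in $S$. Then either $\sigma$ is open, or $\sigma=\delta_r=\{t\in S:t\mid r\}$ for some $r\in S$ with $rS=\{0\}$.
   Context: $S$ has zero $0$; $0$-left cancellative: $st=sr\neq0\Rightarrow t=r$. $\tilde S=S\cup\{1\}$, $1$ an adjoined identity; $s\mid t$ means $t\in s\tilde S$. A string is a nonempty $\sigma\subseteq S$ with $0\notin\sigma$, closed under divisors ($s\mid t\in\sigma\Rightarrow s\in\sigma$), and such that any $s_1,s_2\in\sigma$ have a common multiple $s\in\sigma$ ($s_1\mid s$, $s_2\mid s$). Maximal: not properly contained in another string. The interior of a string $\sigma$ is $\{s\in S:\exists p\in S,\ sp\in\sigma\}$; $\sigma$ is open if it equals its interior. *)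

(* Defs.v *)
Record zsemigroup := ZSemigroup {
  carrier :> Type;
  mul : carrier -> carrier -> carrier;
  zero : carrier;
  mulA : forall a b c, mul a (mul b c) = mul (mul a b) c;
  mul0s : forall s, mul zero s = zero;
  muls0 : forall s, mul s zero = zero
}.

Arguments mul {_} _ _.
Arguments zero {_}.

Section Defs.
Variable S : zsemigroup.

Definition zero_left_cancellative : Prop :=
  forall s t r : S, mul s t = mul s r -> mul s t <> zero -> t = r.

(* s | t  iff  t in s * S~ (S~ = S with an adjoined identity) *)
Definition divides (s t : S) : Prop := t = s \/ exists u : S, t = mul s u.

Definition is_string (sigma : S -> Prop) : Prop :=
  (exists s, sigma s) /\
  ~ sigma zero /\
  (forall s t, divides s t -> sigma t -> sigma s) /\
  (forall s1 s2, sigma s1 -> sigma s2 ->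
     exists s, sigma s /\ divides s1 s /\ divides s2 s).

Definition is_maximal_string (sigma : S -> Prop) : Prop :=
  is_string sigma /\
  forall tau : S -> Prop, is_string tau ->
    (forall s, sigma s -> tau s) -> (forall s, tau s -> sigma s).

Definition interior (sigma : S -> Prop) (s : S) : Prop :=
  exists p : S, sigma (mul s p).

Definition is_open (sigma : S -> Prop) : Prop :=
  forall s, sigma s <-> interior sigma s.

Definition delta (r : S) (t : S) : Prop := divides t r.

End Defs.

(* Main.v *)
Require Import Defs.
From Stdlib Require Import Classical.

Lemma div_trans (S : zsemigroup) (a b c : S) :
  divides S a b -> divides S b c -> divides S a c.
Proof.
  unfold divides; intros [H1|[u H1]] [H2|[v H2]]; subst; auto;
    right; first [exists (mul u v); now rewrite mulA | eexists; reflexivity].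
Qed.

Theorem proposition11p3 (S : zsemigroup) (sigma : S -> Prop) :
  zero_left_cancellative S ->
  is_maximal_string S sigma ->
  is_open S sigma \/
  exists r : S,
    (forall t : S, sigma t <-> delta S r t) /\
    (forall s : S, mul r s = zero).
Proof.
  intros _ [[Hne [H0 [Hdiv Hcm]]] Hmax].
  destruct (classic (forall s, sigma s -> interior S sigma s)) as [Ho|Hno].
  - left; intros s; split; [apply Ho|].
    intros [p Hp]. apply (Hdiv s (mul s p)); [right; exists p; auto|auto].
  - right. apply not_all_ex_not in Hno as [r Hr].
    apply imply_to_and in Hr as [Hr Hni].
    assert (Hnp : forall p, ~ sigma (mul r p)) by (intros p Hp; apply Hni; exists p; auto).
    assert (Heq : forall t, sigma t <-> delta S r t).
    { intros t; split.
      - intros Ht. destruct (Hcm t r Ht Hr) as [s [Hs [Hts Hrs]]].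
        destruct Hrs as [->|[u ->]]; [exact Hts| exfalso; exact (Hnp u Hs)].
      - intros Hd. exact (Hdiv t r Hd Hr). }
    exists r; split; [exact Heq|].
    intros s. destruct (classic (mul r s = zero)) as [E|E]; [exact E|exfalso].
    apply (Hnp s).
    assert (Hst : is_string S (delta S (mul r s))).
    { unfold delta; split; [exists (mul r s); left; auto|].
      split; [|split].
      - intros [Hz|[u Hz]]; apply E; [exact Hz| rewrite Hz; apply mul0s].
      - intros a b Hab Hb; exact (div_trans S a b _ Hab Hb).
      - intros s1 s2 H1 H2; exists (mul r s); split; [left; auto|auto]. }
    apply (Hmax _ Hst).
    + intros t Ht. apply (div_trans S t r); [apply Heq; auto|right; exists s; auto].
    + left; auto.
Qed.
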